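(* Let $(X,d)$ be a metric space, $\mu$ a non-atomic Borel measure on $X$, $m$ a Borel measure on $X$, $0<p<\infty$, and let $\Gamma^*\subset\Gamma^\mu$ be a family of paths closed under taking non-trivial subpaths such that any two points of $X$ are joined by a path in $\Gamma^*$. If $f,g\in\tilde N^{1,p}$ and $f=g$ $m$-almost everywhere, then $\|f-g\|_{N^{1,p}}=0$.
   Context: A path is a continuous map $\gamma:[a,b]\to X$; a subpath is a restriction to a subinterval, trivial if that interval is a point; $\mathrm{Im}(\gamma)=\gamma([a,b])$. $\mu$ non-atomic: $\mu(\{x\})=0$ for all $x$. $\Gamma^\mu$ is the set of all non-trivial injective paths $\gamma$ with $0<\mu(\mathrm{Im}(\tilde\gamma))<\infty$ for every non-trivial subpath $\tilde\gamma$. For Borel $g\ge0$, $\int_\gamma g:=\int_{\mathrm{Im}(\gamma)}g\,d\mu$. For $\Gamma\subset\Gamma^*$, $\mathrm{Mod}_p(\Gamma)=\inf\int_Xg^p\,dm$ over Borel $g\ge0$ with $\int_\gamma g\ge1$ for all $\gamma\in\Gamma$. A Borel $\rho\ge0$ is a $p$-weak upper gradient of $f$ if $|f(x)-f(y)|\le\int_\gamma\rho$ for all $\gamma\in\Gamma^*$ outside a family of $p$-modulus zero, $x,y$ being the endpoints of $\gamma$. $\tilde N^{1,p}$ is the set of $f\in L^p(m)$ having a $p$-weak upper gradient in $L^p(m)$, and $\|f\|_{N^{1,p}}=\|f\|_{L^p(m)}+\inf_\rho\|\rho\|_{L^p(m)}$, the infimum over all $p$-weak upper gradients $\rho$ of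 $f$. *)

(* Defs.v *)
From HB Require Import structures.
From mathcomp Require Import all_boot all_order all_algebra.
From mathcomp Require Import all_classical all_reals all_analysis.
From mathcomp Require Import measurable_realfun.
Set Implicit Arguments. Unset Strict Implicit. Unset Printing Implicit Defensive.
Import Order.TTheory GRing.Theory Num.Theory.
Import numFieldNormedType.Exports.
Local Open Scope classical_set_scope.
Local Open Scope ring_scope.

Section Defs.
Context {R : realType}.

Definition is_metric {X : Type} (dist : X -> X -> R) : Prop :=
  (forall x y, 0 <= dist x y) /\
  (forall x y, dist x y = 0 <-> x = y) /\
  (forall x y, dist x y = dist y x) /\
  (forall x y z, dist x z <= dist x y + dist y z).

Definition metric_open {X : Type} (dist : X -> X -> R) : set (set X) :=
  [set A | forall x, A x -> exists r : R, 0 < r /\ [set y | dist x y < r] `<=` A].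

(* a (candidate) path: a map R -> X considered on the interval [pa, pb] *)
Record mpath (X : Type) := Path { pa : R; pb : R; pf : R -> X }.

Definition is_path {X : Type} (dist : X -> X -> R) (g : mpath X) : Prop :=
  pa g <= pb g /\
  forall t, t \in `[pa g, pb g] -> forall e : R, 0 < e ->
    exists2 delta : R, 0 < delta &
      forall s, s \in `[pa g, pb g] -> `|s - t| < delta ->
        dist (pf g t) (pf g s) < e.

Definition nontrivial {X : Type} (g : mpath X) : Prop := pa g < pb g.

Definition Im {X : Type} (g : mpath X) : set X := pf g @` `[pa g, pb g].

Definition subpath {X : Type} (h g : mpath X) : Prop :=
  pa g <= pa h /\ pa h <= pb h /\ pb h <= pb g /\
  {in `[pa h, pb h], pf h =1 pf g}.

Definition injective_path {X : Type} (g : mpath X) : Prop :=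
  {in `[pa g, pb g] &, injective (pf g)}.

Local Open Scope ereal_scope.

Definition Gamma_mu {d} {X : measurableType d} (dist : X -> X -> R)
  (mu : {measure set X -> \bar R}) : set (mpath X) :=
  [set g | is_path dist g /\ nontrivial g /\ injective_path g /\
     forall h, subpath h g -> nontrivial h -> 0 < mu (Im h) < +oo].

Definition line_int {d} {X : measurableType d}
  (mu : {measure set X -> \bar R}) (g : X -> \bar R) (gam : mpath X) : \bar R :=
  \int[mu]_(x in Im gam) g x.

Definition admissible {d} {X : measurableType d}
  (mu : {measure set X -> \bar R}) (G : set (mpath X)) (g : X -> \bar R) : Prop :=
  measurable_fun [set: X] g /\ (forall x, 0 <= g x) /\
  forall gam, G gam -> 1 <= line_int mu g gam.

Definition Modp {d} {X : measurableType d} (p : R)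
  (mu m : {measure set X -> \bar R}) (G : set (mpath X)) : \bar R :=
  ereal_inf [set \int[m]_x (poweR (g x) p) | g in admissible mu G].

Definition pwug {d} {X : measurableType d} (p : R)
  (mu m : {measure set X -> \bar R}) (Gstar : set (mpath X))
  (f : X -> R) (rho : X -> \bar R) : Prop :=
  measurable_fun [set: X] rho /\ (forall x, 0 <= rho x) /\
  exists G0 : set (mpath X), G0 `<=` Gstar /\ Modp p mu m G0 = 0 /\
    forall gam, Gstar gam -> ~ G0 gam ->
      (`| f (pf gam (pa gam)) - f (pf gam (pb gam)) |)%:E <= line_int mu rho gam.

Definition in_Lp {d} {X : measurableType d} (p : R)
  (m : {measure set X -> \bar R}) (f : X -> R) : Prop :=
  measurable_fun [set: X] f /\ \int[m]_x ((`| f x | `^ p)%R)%:E < +oo.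

Definition in_Lp_e {d} {X : measurableType d} (p : R)
  (m : {measure set X -> \bar R}) (rho : X -> \bar R) : Prop :=
  measurable_fun [set: X] rho /\ \int[m]_x poweR `| rho x | p < +oo.

Definition Ntilde {d} {X : measurableType d} (p : R)
  (mu m : {measure set X -> \bar R}) (Gstar : set (mpath X)) (f : X -> R) : Prop :=
  in_Lp p m f /\ exists rho, pwug p mu m Gstar f rho /\ in_Lp_e p m rho.

Definition N1p_norm {d} {X : measurableType d} (p : R)
  (mu m : {measure set X -> \bar R}) (Gstar : set (mpath X)) (f : X -> R) : \bar R :=
  Lnorm m p%:E (EFin \o f) +
  ereal_inf [set Lnorm m p%:E rho | rho in pwug p mu m Gstar f].

End Defs.

(* Main.v *)
Require Import Defs.
From HB Require Import structures.
From mathcomp Require Import all_boot all_order all_algebra.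
From mathcomp Require Import all_classical all_reals all_analysis.
From mathcomp Require Import measurable_realfun.
From mathcomp Require Import ring lra.
Import Order.TTheory GRing.Theory Num.Theory.
Import numFieldNormedType.Exports.
Local Open Scope classical_set_scope.
Local Open Scope ring_scope.

Section Metric.
Context (R : realType) (d : measure_display) (X : measurableType d)
  (dist : X -> X -> R).
Hypothesis Hm : is_metric dist.
Hypothesis Hopen : forall A, metric_open dist A -> measurable A.

Lemma dist_ge0 x y : 0 <= dist x y. Proof. by case: Hm. Qed.
Lemma dist_sym x y : dist x y = dist y x. Proof. by case: Hm => _ [_ []]. Qed.
Lemma dist_tri x y z : dist x z <= dist x y + dist y z.
Proof. by case: Hm => _ [_ [_]]. Qed.
Lemma dist_eq0 x y : dist x y = 0 <-> x = y. Proof. by case: Hm => _ []. Qed.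

Lemma Im_meas (g : mpath X) : is_path dist g -> measurable (Defs.Im g).
Proof.
move=> [ab cg].
rewrite -[Defs.Im g]setCK; apply: measurableC; apply: Hopen => z nz.
pose phi := fun t => dist z (pf g t).
have cphi : {within `[pa g, pb g], continuous phi}.
  apply/subspace_continuousP => t Ht.
  apply/cvgrPdist_lt => e e0.
  have [delta d0 hd] := cg t Ht e e0.
  rewrite /within; apply/nbhs_ballP; exists delta => //= s.
  rewrite -ball_normE /ball_ /= => hs Hs.
  have := hd s Hs ltac:(by rewrite distrC).
  have h1 := dist_tri z (pf g t) (pf g s).
  have h2 := dist_tri z (pf g s) (pf g t).
  rewrite (dist_sym (pf g s)) in h2.
  rewrite /phi; move=> h3.
  rewrite ltr_norml; apply/andP; split; rewrite /from_subspace /=; lra.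
have [c cab hc] := EVT_min ab cphi.
have pc : 0 < phi c.
  rewrite lt_neqAle dist_ge0 andbT; apply/eqP => /esym /dist_eq0 hz.
  by apply: nz; exists c.
exists (phi c); split => // y /= hy [t tab ty].
have := hc t tab; rewrite /phi ty; move: hy; rewrite /phi => h1 h2; move: (lt_le_trans h1 h2); by rewrite ltxx.
Qed.

Lemma single_meas (x : X) : measurable [set x].
Proof.
rewrite -[[set x]]setCK; apply: measurableC; apply: Hopen => z /= nz.
exists (dist z x); split.
  rewrite lt_neqAle dist_ge0 andbT; apply/eqP => /esym /dist_eq0 hz; exact: nz.
by move=> y /= hy /= yx; move: hy; rewrite yx ltxx.
Qed.

Definition J (g : mpath X) (u v : R) : mpath X :=
  @Path R X (Num.min u v) (Num.max u v) (pf g).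

Lemma inJ (u v r : R) : (r \in `[Num.min u v, Num.max u v]) =
  ((Num.min u v <= r) && (r <= Num.max u v)).
Proof. by rewrite in_itv. Qed.

Lemma J_sub g u v : u \in `[pa g, pb g] -> v \in `[pa g, pb g] ->
  subpath (J g u v) g.
Proof.
rewrite !in_itv /= /J /subpath /= => /andP[h1 h2] /andP[h3 h4].
rewrite !minEle !maxEle; case: ifP => huv; (split; [lra|split; [lra|split; [lra|by []]]]).
Qed.

Lemma J_nt g u v : u != v -> nontrivial (J g u v).
Proof.
move=> uv; rewrite /nontrivial /J /= minEle maxEle.
case: ifP => h; first by rewrite lt_neqAle h uv.
by move/negbT: h; rewrite -ltNge.
Qed.

Lemma J_path g u v : is_path dist g -> u \in `[pa g, pb g] -> v \in `[pa g, pb g] ->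
  is_path dist (J g u v).
Proof.
move=> [ab cg] hu hv; have [h1 [h2 [h3 h4]]] := @J_sub g u v hu hv.
split => // t ht e e0.
have hs : forall s, s \in `[pa (J g u v), pb (J g u v)] -> s \in `[pa g, pb g].
  move=> s; rewrite !in_itv /= => /andP[s1 s2]; apply/andP; split.
  - exact: le_trans h1 s1.
  - exact: le_trans s2 h3.
have [delta d0 hd] := cg t (hs t ht) e e0.
exists delta => // s hs' sd; exact: hd s (hs s hs') sd.
Qed.

Lemma J_ends (F : X -> R) g u v :
  `|F (pf (J g u v) (pa (J g u v))) - F (pf (J g u v) (pb (J g u v)))| =
  `|F (pf g u) - F (pf g v)|.
Proof.
rewrite /J /= minEle maxEle; case: ifP => _ //; by rewrite distrC.
Qed.

Lemma J_Im_sub g t0 s t : t \in `[Num.min t0 s, Num.max t0 s] ->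
  Defs.Im (J g t0 t) `<=` Defs.Im (J g t0 s).
Proof.
move=> ht y; rewrite /Defs.Im /= => -[r hr <-]; exists r => //.
move: ht hr; rewrite /= !in_itv /=.
by case: (leP t0 s) => ?; case: (leP t0 t) => ?; move=> /andP[? ?] /andP[? ?]; apply/andP; split; lra.
Qed.
Lemma J_Im_subg g u v : u \in `[pa g, pb g] -> v \in `[pa g, pb g] ->
  Defs.Im (J g u v) `<=` Defs.Im g.
Proof.
move=> hu hv; have [h1 [h2 [h3 h4]]] := @J_sub g u v hu hv.
move=> y; rewrite /Defs.Im /= => -[r hr <-]; exists r => //.
move: hr; rewrite /= !in_itv /= => /andP[? ?]; apply/andP; split.
- exact: le_trans h1 _.
- exact: le_trans _ h3.
Qed.


Variable mu : {measure set X -> \bar R}.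
Hypothesis Hsing : forall x : X, mu [set x] = 0%E.

Lemma dc_lemma (g : mpath X) (rho : X -> \bar R) (t0 : R) (s : nat -> R) :
  is_path dist g -> t0 \in `[pa g, pb g] ->
  (forall n, s n \in `[pa g, pb g]) ->
  (forall e : R, 0 < e -> exists n0 : nat, forall n, (n0 <= n)%N -> `|s n - t0| < e) ->
  measurable_fun setT rho -> (forall x, 0 <= rho x)%E ->
  (line_int mu rho g < +oo)%E ->
  (fun n => \int[mu]_(x in Defs.Im (J g t0 (s n))) rho x)%E @ \oo --> 0%E.
Proof.
move=> pg ht0 hs hsc mrho rho0 fin.
pose A n := Defs.Im (J g t0 (s n)).
have mA n : measurable (A n) by apply: Im_meas; apply: J_path.
have mI : measurable (Defs.Im g) by apply: Im_meas.
have AI n : A n `<=` Defs.Im g by apply: J_Im_subg.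
have -> : (fun n => \int[mu]_(x in A n) rho x)%E =
  (fun n => \int[mu]_(x in Defs.Im g) (rho \_ (A n)) x)%E.
  by apply: funext => n; rewrite -integral_mkcondr setIidr.
have mfn n : measurable_fun (Defs.Im g) (rho \_ (A n)).
  apply: measurable_funTS; apply/(measurable_restrictT _ (mA n)).
  exact: measurable_funTS.
have ig : mu.-integrable (Defs.Im g) rho.
  apply/integrableP; split; first exact: measurable_funTS.
  under eq_integral => x _ do rewrite gee0_abs//.
  exact: fin.
have ff : {ae mu, forall x, Defs.Im g x -> (fun n => (rho \_ (A n)) x) @ \oo --> (cst 0%E) x}.
  exists [set pf g t0]; split; [exact: single_meas|exact: Hsing|].
  move=> z /= hz; apply: contra_notP hz => zx Iz.
  have e0 : 0 < dist (pf g t0) z.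
    rewrite lt_neqAle dist_ge0 andbT; apply/eqP => /esym /dist_eq0 hz.
    by apply: zx; rewrite hz.
  move: (pg) => [ab cg].
  have [delta d0 hd] := cg t0 ht0 _ e0.
  have [n0 hn0] := hsc delta d0.
  apply: cvg_near_cst; exists n0 => // n /= hn.
  rewrite /patch; case: ifPn => // /set_mem [r hr rz]; exfalso.
  have hsn := hs n; have hsd := hn0 n hn.
  move: hr hsn ht0 hsd; rewrite /= !in_itv /= ltr_norml => hr hsn ht0' hsd.
  have hr' : r \in `[pa g, pb g].
    rewrite in_itv /=; move: hr hsn ht0'.
    by case: (leP t0 (s n)) => ? /andP[? ?] /andP[? ?] /andP[? ?]; apply/andP; split; lra.
  have hrd : `|r - t0| < delta.
    rewrite ltr_norml; move: hr hsd.
    by case: (leP t0 (s n)) => ? /andP[? ?] /andP[? ?]; apply/andP; split; lra.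
  by have := hd r hr' hrd; rewrite rz ltxx.
have fg : {ae mu, forall x n, Defs.Im g x -> (`|(rho \_ (A n)) x| <= rho x)%E}.
  apply: aeW => z n _; rewrite /patch; case: ifP => _.
  + by rewrite gee0_abs.
  + by rewrite abse0.
have [_ _ h] := @dominated_convergence _ _ _ mu (Defs.Im g) mI
  (fun n => rho \_ (A n)) (cst 0%E) rho mfn (measurable_cst _) ff ig fg.
by move: h; rewrite integral0.
Qed.

Lemma divk_bounds (w k : R) : 1 <= k ->
  (0 < w -> 0 < w / k <= w) /\ (w < 0 -> w <= w / k < 0).
Proof.
move=> k1; have k0 : 0 < k by lra.
have e : w / k * k = w by rewrite divfK // gt_eqF.
split => hw.
- have q0 : 0 < w / k by rewrite divr_gt0.
  apply/andP; split => //; nra.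
- have q0 : w / k < 0 by rewrite pmulr_llt0 // invr_gt0.
  apply/andP; split => //; nra.
Qed.

Lemma minmax_in (a b u v r : R) : u \in `[a, b] -> v \in `[a, b] ->
  r \in `[Num.min u v, Num.max u v] -> r \in `[a, b].
Proof.
rewrite !in_itv /=.
by case: (leP u v) => ? /andP[? ?] /andP[? ?] /andP[? ?]; apply/andP; split; lra.
Qed.

Lemma key (g : mpath X) (F G : X -> R) (rF rG : X -> \bar R) (N : set X) (t0 : R) :
  is_path dist g -> nontrivial g ->
  (forall h, subpath h g -> nontrivial h -> (0 < mu (Defs.Im h))%E) ->
  measurable N -> mu (N `&` Defs.Im g) = 0%E -> (forall x, ~ N x -> F x = G x) ->
  measurable_fun setT rF -> measurable_fun setT rG ->
  (forall x, 0 <= rF x)%E -> (forall x, 0 <= rG x)%E ->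
  (line_int mu rF g < +oo)%E -> (line_int mu rG g < +oo)%E ->
  (forall h, subpath h g -> nontrivial h ->
     (`|F (pf h (pa h)) - F (pf h (pb h))|%:E <= line_int mu rF h)%E) ->
  (forall h, subpath h g -> nontrivial h ->
     (`|G (pf h (pa h)) - G (pf h (pb h))|%:E <= line_int mu rG h)%E) ->
  t0 \in `[pa g, pb g] ->
  F (pf g t0) = G (pf g t0).
Proof.
move=> pg ntg hpos mN hN hFG mF mG F0 G0 finF finG hF hG ht0.
have [//|hne] := eqVneq (F (pf g t0)) (G (pf g t0)).
exfalso.
have dpos : 0 < `|F (pf g t0) - G (pf g t0)| by rewrite normr_gt0 subr_eq0.
have ab : pa g < pb g := ntg.
pose w := if t0 < pb g then pb g - t0 else pa g - t0.
pose s n := t0 + w / n.+1%:R.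
have k1 n : 1 <= n.+1%:R :> R by rewrite ler1n.
have hwcase : (t0 < pb g /\ w = pb g - t0) \/ (t0 = pb g /\ w = pa g - t0).
  move: ht0; rewrite in_itv /= => /andP[h1 h2].
  rewrite /w; case: ifPn => h; [left|right]; split => //.
  by move: h; rewrite -leNgt => h; apply/eqP; rewrite eq_le h h2.
clearbody w.
have hs n : s n \in `[pa g, pb g].
  have [b1 b2] := @divk_bounds w _ (k1 n).
  move: ht0; rewrite !in_itv /= /s => /andP[h1 h2].
  case: hwcase => [[h ew]|[h ew]].
    have /andP[qa qb] := b1 ltac:(lra).
    move: qa qb; move: (w / n.+1%:R) => q qa qb; apply/andP; split; lra.
  have /andP[qa qb] := b2 ltac:(lra).
  move: qa qb; move: (w / n.+1%:R) => q qa qb; apply/andP; split; lra.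
have hsne n : t0 != s n.
  have [b1 b2] := @divk_bounds w _ (k1 n).
  move: ht0; rewrite !in_itv /= /s => /andP[h1 h2].
  case: hwcase => [[h ew]|[h ew]].
    have /andP[qa qb] := b1 ltac:(lra).
    move: qa qb; move: (w / n.+1%:R) => q qa qb; apply/eqP; lra.
  have /andP[qa qb] := b2 ltac:(lra).
  move: qa qb; move: (w / n.+1%:R) => q qa qb; apply/eqP; lra.
have hsabs n : `|s n - t0| = `|w| / n.+1%:R.
  rewrite /s addrAC subrr add0r normrM normfV normr_nat //.
have hsc : forall e : R, 0 < e -> exists n0 : nat, forall n, (n0 <= n)%N -> `|s n - t0| < e.
  move=> e e0; exists (Num.trunc (`|w| / e)) => m hm; rewrite hsabs.
  have : `|w| / e < m.+1%:R by rewrite -truncn_le_nat.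
  have km : 0 < m.+1%:R :> R by exact: lt_le_trans ltr01 (k1 m).
  rewrite ltr_pdivrMr // => h; rewrite ltr_pdivrMr //.
  by rewrite mulrC.
have step1 n : (`|F (pf g t0) - G (pf g t0)|%:E <=
    \int[mu]_(x in Defs.Im (J g t0 (s n))) rF x +
    \int[mu]_(x in Defs.Im (J g t0 (s n))) rG x)%E.
  have tn := hs n.
  have sub := @J_sub g t0 (s n) ht0 tn.
  have pos := hpos _ sub (@J_nt g t0 (s n) (hsne n)).
  have mAn : measurable (Defs.Im (J g t0 (s n))) := Im_meas _ (@J_path g t0 (s n) pg ht0 tn).
  have mI := Im_meas _ pg.
  have mNI : measurable (N `&` Defs.Im g) := measurableI _ _ mN mI.
  have [t [ht hNt]] : exists t, t \in `[Num.min t0 (s n), Num.max t0 (s n)] /\ ~ N (pf g t).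
    apply: contrapT => hno.
    have sub2 : Defs.Im (J g t0 (s n)) `<=` N `&` Defs.Im g.
      move=> y hy; split; last exact: (@J_Im_subg g t0 (s n) ht0 tn y hy).
      case: hy => r hr <-; apply: contrapT => hn'; apply: hno; exists r; split => //.
    have := @le_measure _ _ _ mu _ _ (mem_set mAn) (mem_set mNI) sub2.
    move=> H; have hN' : (mu (N `&` Defs.Im g) <= 0)%E by rewrite hN.
    by move: (lt_le_trans pos (le_trans H hN')); rewrite ltxx.
  have htab : t \in `[pa g, pb g] := @minmax_in _ _ _ _ _ ht0 tn ht.
  have Ft := hFG _ hNt.
  have tne : t0 != t.
    by apply/eqP => e; move: hne; rewrite e Ft eqxx.
  have sub' := @J_sub g t0 t ht0 htab.
  have nt' := @J_nt g t0 t tne.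
  have hF1 := hF _ sub' nt'. have hG1 := hG _ sub' nt'.
  rewrite J_ends in hF1; rewrite J_ends in hG1.
  have mJt := Im_meas _ (@J_path g t0 t pg ht0 htab).
  have iF : (line_int mu rF (J g t0 t) <= \int[mu]_(x in Defs.Im (J g t0 (s n))) rF x)%E.
    apply: ge0_subset_integral => //; [exact: measurable_funTS|exact: J_Im_sub].
  have iG : (line_int mu rG (J g t0 t) <= \int[mu]_(x in Defs.Im (J g t0 (s n))) rG x)%E.
    apply: ge0_subset_integral => //; [exact: measurable_funTS|exact: J_Im_sub].
  apply: le_trans (leeD (le_trans hF1 iF) (le_trans hG1 iG)).
  rewrite -EFinD lee_fin.
  have -> : F (pf g t0) - G (pf g t0) = (F (pf g t0) - F (pf g t)) - (G (pf g t0) - G (pf g t)).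
    by rewrite Ft; ring.
  exact: ler_normB.
have cF := @dc_lemma g rF t0 s pg ht0 hs hsc mF F0 finF.
have cG := @dc_lemma g rG t0 s pg ht0 hs hsc mG G0 finG.
have cS := cvgeD (@fin_num_adde_defl R 0%E 0%E (isT : (0%E : \bar R) \is a fin_num)) cF cG.
have := cvge_to_ge (cS _) (nearW _ step1).
move=> H; have := H eventually_filter eventually_filter eventually_filter.
by rewrite adde0 lee_fin leNgt dpos.
Qed.

Lemma sub_Im (h g : @mpath R X) : subpath h g -> Defs.Im h `<=` Defs.Im g.
Proof.
move=> [h1 [h2 [h3 h4]]] y; rewrite /Defs.Im /= => -[r hr <-]; exists r.
  move: hr; rewrite /= !in_itv /= => /andP[? ?]; apply/andP; split.
  - exact: le_trans h1 _.
  - exact: le_trans _ h3.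
by rewrite h4.
Qed.

Lemma line_int_mono (g : mpath X) (k1 k2 : X -> \bar R) :
  is_path dist g -> measurable_fun setT k1 -> measurable_fun setT k2 ->
  (forall x, 0 <= k1 x)%E -> (forall x, k1 x <= k2 x)%E ->
  (line_int mu k1 g <= line_int mu k2 g)%E.
Proof.
move=> pg m1 m2 k10 k12; apply: ge0_le_integral => //.
- exact: Im_meas.
- exact: measurable_funTS.
- exact: measurable_funTS.
Qed.

Lemma rE_null (g : mpath X) (N : set X) :
  is_path dist g -> measurable N ->
  (line_int mu (fun x => if x \in N then +oo else 0)%E g < +oo)%E ->
  mu (N `&` Defs.Im g) = 0%E.
Proof.
move=> pg mN fin; have mI := Im_meas _ pg.
have mNI : measurable (N `&` Defs.Im g) by exact: measurableI.
apply: contrapT => hne.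
have : (\int[mu]_(x in N `&` Defs.Im g) (fun x => if x \in N then +oo else 0)%E x
   <= line_int mu (fun x => if x \in N then +oo else 0)%E g)%E.
  apply: ge0_subset_integral => //.
  - apply: measurable_funTS; apply: measurable_fun_ifT => //.
    apply: (measurable_fun_bool true); rewrite setTI.
    rewrite (_ : _ @^-1` _ = N) //; apply/seteqP; split => x /=.
    + by move/set_mem.
    + by move=> Nx; exact: mem_set.
  - by move=> x _; case: ifP.
rewrite (eq_integral (cst +oo%E)); last first.
  by move=> x /set_mem [Nx _]; rewrite (mem_set Nx).
rewrite integral_cst // gt0_mulye; last first.
  by rewrite lt0e measure_ge0 andbT; apply/eqP.
by rewrite leye_eq => /eqP h; move: fin; rewrite h ltxx.
Qed.
End Metric.

Section Mod.
Context (R : realType) (d : measure_display) (X : measurableType d).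
Local Open Scope ereal_scope.

Lemma Modp_ge0 (p : R) (mu m : {measure set X -> \bar R}) (G : set (mpath X)) :
  0 <= Modp p mu m G.
Proof.
apply: le_ereal_inf_tmp => _ [h _ <-]; apply: integral_ge0 => x _.
exact: poweR_ge0.
Qed.

Lemma Modp_le (p : R) (mu : {measure set X -> \bar R}) (m : {measure set X -> \bar R}) (G : set (mpath X)) h :
  admissible mu G h -> Modp p mu m G <= \int[m]_x poweR (h x) p.
Proof. by move=> ah; apply: ereal_inf_lbound; exists h. Qed.

Lemma Modp0 (p : R) (mu m : {measure set X -> \bar R}) (G : set (mpath X)) :
  (forall e : R, (0 < e)%R -> exists2 h, admissible mu G h &
     \int[m]_x poweR (h x) p <= e%:E) -> Modp p mu m G = 0.
Proof.
move=> H; apply/eqP; rewrite eq_le Modp_ge0 andbT.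
apply/lee_addgt0Pr => e e0; rewrite add0e.
have [h ah hle] := H e e0.
exact: le_trans (@Modp_le p mu m G h ah) hle.
Qed.

Lemma Modp_small (p : R) (mu m : {measure set X -> \bar R}) (G : set (mpath X)) (e : R) :
  Modp p mu m G = 0 -> (0 < e)%R -> exists2 h, admissible mu G h &
     \int[m]_x poweR (h x) p < e%:E.
Proof.
move=> H e0; have : Modp p mu m G < e%:E by rewrite H lte_fin.
by move=> /ereal_inf_lt [_ [h ah <-] hlt]; exists h.
Qed.

Lemma poweR_maxe_le (a b : \bar R) (p : R) : 0 <= a -> 0 <= b ->
  poweR (maxe a b) p <= poweR a p + poweR b p.
Proof.
move=> a0 b0; case: (leP a b) => _.
- by rewrite leeDr // poweR_ge0.
- by rewrite leeDl // poweR_ge0.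
Qed.


Lemma scale_small (m : {measure set X -> \bar R}) (rho : X -> \bar R) (p e : R) :
  (0 < p)%R -> (0 < e)%R -> measurable_fun setT rho -> (forall x, 0 <= rho x) ->
  \int[m]_x poweR (rho x) p < +oo ->
  exists2 c : R, (0 < c)%R & \int[m]_x poweR (c%:E * rho x) p <= e%:E.
Proof.
move=> p0 e0 mrho rho0 fin.
have I0 : 0 <= \int[m]_x poweR (rho x) p by apply: integral_ge0 => x _; exact: poweR_ge0.
have finI : \int[m]_x poweR (rho x) p \is a fin_num by rewrite ge0_fin_numE.
set K := fine (\int[m]_x poweR (rho x) p).
have K0 : (0 <= K)%R by rewrite /K fine_ge0.
have q0 : (0 < e / (K + 1))%R by rewrite divr_gt0 //; lra.
exists ((e / (K + 1)) `^ p^-1)%R; first exact: powR_gt0.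
under eq_integral do rewrite poweRM // ?lee_fin ?powR_ge0 // poweR_EFin.
rewrite ge0_integralZl_EFin //; last 3 first.
- by move=> x _; exact: poweR_ge0.
- exact: measurableT_comp (measurable_poweR _) mrho.
- exact: powR_ge0.
rewrite -powRrM mulVf ?gt_eqF // (powRr1 (ltW q0)) -(fineK finI) -/K -EFinM lee_fin.
have hq : (e / (K + 1) * (K + 1) = e)%R by rewrite divfK // gt_eqF //; lra.
move: q0 hq; move: (e / (K + 1))%R => q q0 hq; nra.
Qed.

End Mod.

Theorem corollary4p1 (R : realType) (d : measure_display) (X : measurableType d)
  (dist : X -> X -> R)
  (mu m : {measure set X -> \bar R}) (p : R) (Gstar : set (mpath X))
  (f g : X -> R) :
  is_metric dist ->
  (@measurable d X = <<s metric_open dist >>) ->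
  (forall x : X, mu [set x] = 0%E) ->
  0 < p ->
  Gstar `<=` Gamma_mu dist mu ->
  (forall gam h, Gstar gam -> subpath h gam -> nontrivial h -> Gstar h) ->
  (forall x y : X, x <> y -> exists2 gam, Gstar gam &
      (pf gam (pa gam) = x /\ pf gam (pb gam) = y) \/
      (pf gam (pa gam) = y /\ pf gam (pb gam) = x)) ->
  Ntilde p mu m Gstar f -> Ntilde p mu m Gstar g ->
  {ae m, forall x, f x = g x} ->
  N1p_norm p mu m Gstar (f \- g) = 0%E.
Proof.
move=> Hm Hmeas Hsing p0 Hsub Hclose _ [[mf _] [rF [pwF LpF]]] [[mg _] [rG [pwG LpG]]] Hae.
have Hopen : forall A, metric_open dist A -> measurable A.
  by move=> A oA; rewrite Hmeas; exact: sub_sigma_algebra.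
have IM := @Im_meas R d X dist Hm Hopen.
case: Hae => N [mN mN0 subN].
have hFG : forall x, ~ N x -> f x = g x.
  by move=> x nx; apply: contrapT => hx; apply: nx; apply: subN.
pose rE := (fun x => if x \in N then +oo else 0)%E : X -> \bar R.
have rE0 : forall x, (0 <= rE x)%E by move=> x; rewrite /rE; case: ifP.
have mrE : measurable_fun setT rE.
  apply: measurable_fun_ifT => //.
  apply: (measurable_fun_bool true); rewrite setTI.
  rewrite (_ : _ @^-1` _ = N) //; apply/seteqP; split => x /=.
  + by move/set_mem.
  + by move=> Nx; exact: mem_set.
have p0' : p^-1 != 0 by rewrite invr_neq0 // gt_eqF.
have LE : Lnorm m p%:E rE = 0%E.
  rewrite unlock /=.
  rewrite (ae_eq_integral (cst 0%E)) //.
  - by rewrite integral0 poweR0r.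
  - exact: (measurableT_comp (measurable_poweR p) (measurableT_comp (@abse_measurable _ _) mrE)).
  - exists N; split => // x /= hx; apply: contrapT => nx; apply: hx => _.
    have -> : rE x = 0%E by rewrite /rE; case: ifP => // /set_mem.
    by rewrite abse0 poweR0r // gt_eqF.
have LD : Lnorm m p%:E (EFin \o (f \- g)) = 0%E.
  rewrite unlock /=.
  rewrite (ae_eq_integral (cst 0%E)) //.
  - by rewrite integral0 poweR0r.
  - have mD : measurable_fun setT (EFin \o (f \- g)).
      by apply/measurable_EFinP; apply: measurable_funB.
    exact: (measurableT_comp (measurable_poweR p) (measurableT_comp (@abse_measurable _ _) mD)).
  - exists N; split => // x /= hx; apply: contrapT => nx; apply: hx => _.
    by rewrite (hFG _ nx) subrr normr0 powR0 // gt_eqF.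
have pwE : pwug p mu m Gstar (f \- g) rE.
  split; first exact: mrE. split; first exact: rE0.
  case: pwF => mrF [rF0 [Gf [GfS [Gf0 hGf]]]].
  case: pwG => mrG [rG0 [Gg [GgS [Gg0 hGg]]]].
  have finF : (\int[m]_x poweR (rF x) p < +oo)%E.
    by case: LpF => _; under eq_integral => x _ do rewrite gee0_abs //.
  have finG : (\int[m]_x poweR (rG x) p < +oo)%E.
    by case: LpG => _; under eq_integral => x _ do rewrite gee0_abs //.
  pose D := fun gam : @mpath R X =>
    `|(f \- g) (pf gam (pa gam)) - (f \- g) (pf gam (pb gam))|.
  exists [set gam | Gstar gam /\ ~ ((D gam)%:E <= line_int mu rE gam)%E].
  split; first by move=> gam [].
  split; last first.
    by move=> gam Gg' nG; apply: contrapT => hn; apply: nG; split.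
  apply: Modp0 => e e0.
  have e4 : 0 < e / 4 by rewrite divr_gt0.
  have [hf [mhf [hf0 ahf]] ihf] := @Modp_small R d X p mu m Gf (e / 4) Gf0 e4.
  have [hg [mhg [hg0 ahg]] ihg] := @Modp_small R d X p mu m Gg (e / 4) Gg0 e4.
  have [cF cF0 icF] := @scale_small R d X m rF p (e / 4) p0 e4 mrF rF0 finF.
  have [cG cG0 icG] := @scale_small R d X m rG p (e / 4) p0 e4 mrG rG0 finG.
  pose H := fun x => maxe (maxe (hf x) (hg x)) (maxe (cF%:E * rF x) (cG%:E * rG x))%E.
  have mcF : measurable_fun setT (fun x => cF%:E * rF x)%E := measurable_funeM _ mrF.
  have mcG : measurable_fun setT (fun x => cG%:E * rG x)%E := measurable_funeM _ mrG.
  have cF0' x : (0 <= cF%:E * rF x)%E by rewrite mule_ge0 // lee_fin ltW.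
  have cG0' x : (0 <= cG%:E * rG x)%E by rewrite mule_ge0 // lee_fin ltW.
  have mH : measurable_fun setT H.
    by apply: measurable_maxe; apply: measurable_maxe.
  have H0 x : (0 <= H x)%E by rewrite /H !le_max hf0.
  exists H.
    split => //; split => //.
    move=> gam [Gga hn].
    have [pg [ntg [_ hpos]]] := Hsub _ Gga.
    have LM := @line_int_mono R d X dist Hm Hopen mu gam.
    have [[h [sh [nh Gfh]]]|nA] := pselect (exists h, subpath h gam /\ nontrivial h /\ Gf h).
      have [ph _] := Hsub _ (Hclose _ _ Gga sh nh).
      apply: le_trans (ahf h Gfh) _.
      apply: (@le_trans _ _ (line_int mu hf gam)).
        apply: ge0_subset_integral => //; [exact: IM|exact: IM|exact: measurable_funTS|exact: sub_Im].
      by apply: LM => // x; rewrite /H !le_max lexx.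
    have [[h [sh [nh Ggh]]]|nB] := pselect (exists h, subpath h gam /\ nontrivial h /\ Gg h).
      have [ph _] := Hsub _ (Hclose _ _ Gga sh nh).
      apply: le_trans (ahg h Ggh) _.
      apply: (@le_trans _ _ (line_int mu hg gam)).
        apply: ge0_subset_integral => //; [exact: IM|exact: IM|exact: measurable_funTS|exact: sub_Im].
      by apply: LM => // x; rewrite /H !le_max lexx orbT.
    have [iF|iF] := eqVneq (line_int mu rF gam) +oo%E.
      apply: (@le_trans _ _ (line_int mu (fun x => cF%:E * rF x)%E gam)); last first.
        by apply: LM => // x; rewrite /H !le_max lexx !orbT.
      rewrite /line_int ge0_integralZl_EFin //; last 3 first.
      - exact: IM.
      - exact: measurable_funTS.
      - exact: ltW.
      by move: iF; rewrite /line_int => ->; rewrite gt0_muley ?lte_fin // leey.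
    have [iG|iG] := eqVneq (line_int mu rG gam) +oo%E.
      apply: (@le_trans _ _ (line_int mu (fun x => cG%:E * rG x)%E gam)); last first.
        by apply: LM => // x; rewrite /H !le_max lexx !orbT.
      rewrite /line_int ge0_integralZl_EFin //; last 3 first.
      - exact: IM.
      - exact: measurable_funTS.
      - exact: ltW.
      by move: iG; rewrite /line_int => ->; rewrite gt0_muley ?lte_fin // leey.
    exfalso; apply: (hn).
    have finE : (line_int mu rE gam < +oo)%E.
      have H1 : (line_int mu rE gam < (D gam)%:E)%E by rewrite ltNge; apply/negP.
      exact: lt_trans H1 (ltry _).
    have hN := @rE_null R d X dist Hm Hopen mu gam N pg mN finE.
    have hpos' h : subpath h gam -> nontrivial h -> (0 < mu (Defs.Im h))%E.
      by move=> sh nh; case/andP: (hpos h sh nh).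
    have hFk h : subpath h gam -> nontrivial h ->
        (`|f (pf h (pa h)) - f (pf h (pb h))|%:E <= line_int mu rF h)%E.
      move=> sh nh; apply: hGf; first exact: Hclose sh nh.
      by move=> Gfh; apply: nA; exists h.
    have hGk h : subpath h gam -> nontrivial h ->
        (`|g (pf h (pa h)) - g (pf h (pb h))|%:E <= line_int mu rG h)%E.
      move=> sh nh; apply: hGg; first exact: Hclose sh nh.
      by move=> Ggh; apply: nB; exists h.
    have ntg' : (pa gam < pb gam) := ntg.
    have ina : pa gam \in `[pa gam, pb gam] by rewrite in_itv /= lexx ltW.
    have inb : pb gam \in `[pa gam, pb gam] by rewrite in_itv /= lexx ltW.
    have KK := @key R d X dist Hm Hopen mu Hsing gam f g rF rG N.
    have ka := KK _ pg ntg hpos' mN hN hFG mrF mrG rF0 rG0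
      ltac:(by rewrite ltey) ltac:(by rewrite ltey) hFk hGk ina.
    have kb := KK _ pg ntg hpos' mN hN hFG mrF mrG rF0 rG0
      ltac:(by rewrite ltey) ltac:(by rewrite ltey) hFk hGk inb.
    rewrite /D /= ka kb !subrr normr0.
    exact: integral_ge0.
  have mP (k : X -> \bar R) : measurable_fun setT k -> measurable_fun setT (fun x => poweR (k x) p).
    by move=> mk; exact: (measurableT_comp (measurable_poweR p) mk).
  have step x : (poweR (H x) p <= (poweR (hf x) p + poweR (hg x) p) +
      (poweR (cF%:E * rF x) p + poweR (cG%:E * rG x) p))%E.
    have a0 : (0 <= maxe (hf x) (hg x))%E by rewrite le_max hf0.
    have b0 : (0 <= maxe (cF%:E * rF x) (cG%:E * rG x))%E by rewrite le_max cF0'.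
    apply: le_trans (@poweR_maxe_le R _ _ p a0 b0) _.
    by apply: leeD; apply: poweR_maxe_le.
  have I1 : (\int[m]_x poweR (H x) p <= \int[m]_x ((poweR (hf x) p + poweR (hg x) p) +
      (poweR (cF%:E * rF x) p + poweR (cG%:E * rG x) p)))%E.
    apply: ge0_le_integral => //.
    - by move=> x _; exact: poweR_ge0.
    - exact: measurable_funTS (mP _ mH).
    - apply: measurable_funTS; apply: emeasurable_funD; apply: emeasurable_funD; exact: mP.
  apply: le_trans I1 _.
  rewrite ge0_integralD //; first last.
  - by apply: emeasurable_funD; exact: mP.
  - by move=> x _; rewrite adde_ge0 // poweR_ge0.
  - by apply: emeasurable_funD; exact: mP.
  - by move=> x _; rewrite adde_ge0 // poweR_ge0.
  rewrite ge0_integralD //; first last.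
  - exact: mP.
  - by move=> x _; exact: poweR_ge0.
  - exact: mP.
  - by move=> x _; exact: poweR_ge0.
  rewrite ge0_integralD //; first last.
  - exact: mP.
  - by move=> x _; exact: poweR_ge0.
  - exact: mP.
  - by move=> x _; exact: poweR_ge0.
  have -> : e = (e / 4 + e / 4) + (e / 4 + e / 4) by field.
  rewrite !EFinD.
  by apply: leeD; apply: leeD => //; apply: ltW.
rewrite /N1p_norm LD add0e.
apply/eqP; rewrite eq_le; apply/andP; split.
- apply: ge_ereal_inf; exists 0%E => //; exists rE => //.
- by apply: le_ereal_inf_tmp => _ [rho _ <-]; exact: Lnorm_ge0.
Qed.
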